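(* For every non-empty open set $U$ of $\mathcal{K}_2$ there exists $N\ge3$ such that $\mathcal{B}_2^\phi(j)\cap U\neq\emptyset$ for all $j\ge N$. In particular, $\mathcal{B}_2^\phi=\bigcup_{j\ge3}\mathcal{B}_2^\phi(j)$ is dense in $\mathcal{K}_2$.
   Context: $\mathcal{K}_2$ is the set of centrally symmetric convex bodies in $\mathbb{R}^2$ (compact convex sets with non-empty interior, symmetric about the origin) with the Hausdorff metric. For a spanning set $a=\{a_1,\dots,a_n\}\subset\mathbb{R}^2$ with $n\ge3$ and $w>\log 2n$ (natural log), let $\phi_{a,w}(x)=\frac{1}{2n}\sum_{i=1}^n\left(e^{w(a_i\cdot x-1)}+e^{w(-a_i\cdot x-1)}\right)$. For $j\ge3$, $\mathcal{B}_2^\phi(j)$ is the set of $C\subset\mathbb{R}^2$ for which there exist a spanning set $a=\{a_1,\dots,a_j\}\subset\mathbb{R}^2$ and $w>\log2j$ with $C=\{x\in\mathbb{R}^2:\phi_{a,w}(x)\le1\}$. *)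

(* Defs.v *)
From Stdlib Require Import Reals Lra.
Open Scope R_scope.

Definition pt := (R * R)%type.

Definition dot (u v : pt) : R := fst u * fst v + snd u * snd v.

Definition dist2 (u v : pt) : R :=
  sqrt ((fst u - fst v) ^ 2 + (snd u - snd v) ^ 2).

Fixpoint fsum (f : nat -> R) (n : nat) : R :=
  match n with
  | O => 0
  | S m => fsum f m + f m
  end.

Definition pscale (c : R) (u : pt) : pt := (c * fst u, c * snd u).
Definition padd (u v : pt) : pt := (fst u + fst v, snd u + snd v).

Definition convex (C : pt -> Prop) : Prop :=
  forall x y t, C x -> C y -> 0 <= t <= 1 ->
    C (padd (pscale t x) (pscale (1 - t) y)).

Definition closed_set (C : pt -> Prop) : Prop :=
  forall x, (forall eps, 0 < eps -> exists y, C y /\ dist2 x y < eps) -> C x.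

Definition bounded_set (C : pt -> Prop) : Prop :=
  exists M, forall x, C x -> dist2 x (0, 0) <= M.

(* compact in R^2 = closed and bounded (Heine-Borel) *)
Definition compact_set (C : pt -> Prop) : Prop := closed_set C /\ bounded_set C.

Definition nonempty_interior (C : pt -> Prop) : Prop :=
  exists x r, 0 < r /\ forall y, dist2 x y < r -> C y.

Definition symmetric (C : pt -> Prop) : Prop :=
  forall x, C x -> C (- fst x, - snd x).

Definition K2 (C : pt -> Prop) : Prop :=
  convex C /\ compact_set C /\ nonempty_interior C /\ symmetric C.

Definition hclose (A B : pt -> Prop) (r : R) : Prop :=
  (forall a, A a -> exists b, B b /\ dist2 a b <= r) /\
  (forall b, B b -> exists a, A a /\ dist2 a b <= r).

(* d_H(A,B) < eps, where d_H(A,B) = inf { r >= 0 | hclose A B r } *)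
Definition hdist_lt (A B : pt -> Prop) (eps : R) : Prop :=
  exists r, 0 <= r /\ r < eps /\ hclose A B r.

Definition open_in_K2 (U : (pt -> Prop) -> Prop) : Prop :=
  (forall C, U C -> K2 C) /\
  (forall C, U C -> exists eps, 0 < eps /\
     forall D, K2 D -> hdist_lt C D eps -> U D).

Definition spanning (a : nat -> pt) (n : nat) : Prop :=
  forall x : pt, exists c : nat -> R,
    fst x = fsum (fun i => c i * fst (a i)) n /\
    snd x = fsum (fun i => c i * snd (a i)) n.

Definition phi (a : nat -> pt) (n : nat) (w : R) (x : pt) : R :=
  / (2 * INR n) *
  fsum (fun i => exp (w * (dot (a i) x - 1)) + exp (w * (- dot (a i) x - 1))) n.

Definition distinct_pts (a : nat -> pt) (n : nat) : Prop :=
  forall i k, (i < n)%nat -> (k < n)%nat -> a i = a k -> i = k.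

Definition Bphi (j : nat) (C : pt -> Prop) : Prop :=
  exists (a : nat -> pt) (w : R),
    distinct_pts a j /\ spanning a j /\ ln (2 * INR j) < w /\
    forall x, C x <-> phi a j w x <= 1.

(* Main.v *)
Require Import Defs.
From Stdlib Require Import Reals Lra Lia Classical ClassicalEpsilon.
Open Scope R_scope.


Lemma sqrt_le_abs_sum a b : sqrt (a ^ 2 + b ^ 2) <= Rabs a + Rabs b.
Proof.
  rewrite <- (sqrt_square (Rabs a + Rabs b)) by (pose proof (Rabs_pos a); pose proof (Rabs_pos b); lra).
  apply sqrt_le_1_alt.
  pose proof (Rabs_pos a); pose proof (Rabs_pos b).
  assert (a ^ 2 = Rabs a * Rabs a) by (rewrite <- Rabs_mult; simpl; rewrite Rmult_1_r; rewrite Rabs_right; [ring| nra]).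
  assert (b ^ 2 = Rabs b * Rabs b) by (rewrite <- Rabs_mult; simpl; rewrite Rmult_1_r; rewrite Rabs_right; [ring| nra]).
  nra.
Qed.

Lemma abs_le_sqrt1 a b : Rabs a <= sqrt (a ^ 2 + b ^ 2).
Proof.
  rewrite <- sqrt_Rsqr_abs. apply sqrt_le_1_alt. unfold Rsqr. nra.
Qed.

Lemma abs_le_sqrt2 a b : Rabs b <= sqrt (a ^ 2 + b ^ 2).
Proof.
  rewrite <- sqrt_Rsqr_abs. apply sqrt_le_1_alt. unfold Rsqr. nra.
Qed.

Lemma dist2_le (x y : pt) : dist2 x y <= Rabs (fst x - fst y) + Rabs (snd x - snd y).
Proof. apply sqrt_le_abs_sum. Qed.

Lemma dist2_ge1 (x y : pt) : Rabs (fst x - fst y) <= dist2 x y.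
Proof. apply abs_le_sqrt1. Qed.
Lemma dist2_ge2 (x y : pt) : Rabs (snd x - snd y) <= dist2 x y.
Proof. apply abs_le_sqrt2. Qed.

Lemma dist2_sym x y : dist2 x y = dist2 y x.
Proof. unfold dist2. f_equal. ring. Qed.

Lemma fsum_ext f g n : (forall i, (i < n)%nat -> f i = g i) -> fsum f n = fsum g n.
Proof.
  induction n; simpl; intros H; auto.
  rewrite IHn by (intros; apply H; lia). rewrite H by lia. auto.
Qed.

Lemma fsum_le f g n : (forall i, (i < n)%nat -> f i <= g i) -> fsum f n <= fsum g n.
Proof.
  induction n; simpl; intros H; [lra|].
  pose proof (IHn (fun i Hi => H i ltac:(lia))). pose proof (H n ltac:(lia)). lra.
Qed.

Lemma fsum_nonneg f n : (forall i, (i < n)%nat -> 0 <= f i) -> 0 <= fsum f n.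
Proof.
  intros H. replace 0 with (fsum (fun _ => 0) n). apply fsum_le; auto.
  induction n; simpl; auto. rewrite IHn; [ring| intros; apply H; lia].
Qed.

Lemma fsum_ge_term f n k : (forall i, (i < n)%nat -> 0 <= f i) -> (k < n)%nat -> f k <= fsum f n.
Proof.
  induction n; intros H Hk; [lia|]. simpl.
  destruct (Nat.eq_dec k n).
  - subst. pose proof (fsum_nonneg f n (fun i Hi => H i ltac:(lia))). lra.
  - pose proof (IHn (fun i Hi => H i ltac:(lia)) ltac:(lia)). pose proof (H n ltac:(lia)). lra.
Qed.

Lemma fsum_add f g n : fsum (fun i => f i + g i) n = fsum f n + fsum g n.
Proof. induction n; simpl; [ring| rewrite IHn; ring]. Qed.

Lemma fsum_scale c f n : fsum (fun i => c * f i) n = c * fsum f n.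
Proof. induction n; simpl; [ring| rewrite IHn; ring]. Qed.

Lemma fsum_const c n : fsum (fun _ => c) n = INR n * c.
Proof. induction n; simpl fsum; [simpl; ring| rewrite IHn, S_INR; ring]. Qed.

Lemma fsum_delta i0 al v n : (i0 < n)%nat ->
  fsum (fun i => (if Nat.eqb i i0 then al else 0) * v i) n = al * v i0.
Proof.
  induction n; intros H; [lia|]. simpl.
  destruct (Nat.eq_dec i0 n).
  - subst. rewrite Nat.eqb_refl.
    rewrite (fsum_ext _ (fun _ => 0)). rewrite fsum_const. ring.
    intros i Hi. destruct (Nat.eqb_spec i n); [lia| ring].
  - rewrite IHn by lia. destruct (Nat.eqb_spec n i0); [lia| ring].
Qed.

Lemma abs_le_inv a b : Rabs a <= b -> - b <= a <= b.
Proof. unfold Rabs; destruct (Rcase_abs a); lra. Qed.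

Definition Ssum (a : nat -> pt) (n : nat) (w : R) (x : pt) : R :=
  fsum (fun i => exp (w * (dot (a i) x - 1)) + exp (w * (- dot (a i) x - 1))) n.

Lemma phi_le1_iff a n w x : (0 < n)%nat -> (phi a n w x <= 1 <-> Ssum a n w x <= 2 * INR n).
Proof.
  intros Hn. pose proof (lt_0_INR n Hn). unfold phi; fold (Ssum a n w x).
  split; intros H'.
  - replace (Ssum a n w x) with ((2 * INR n) * (/ (2 * INR n) * Ssum a n w x)) by (field; lra).
    assert (0 < 2 * INR n) by lra. nra.
  - replace 1 with (/ (2 * INR n) * (2 * INR n)) by (field; lra).
    apply Rmult_le_compat_l; auto. left; apply Rinv_0_lt_compat; lra.
Qed.

Lemma exp_convex t u v : 0 <= t <= 1 -> exp (t * u + (1 - t) * v) <= t * exp u + (1 - t) * exp v.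
Proof.
  intros Ht. set (m := t * u + (1 - t) * v).
  assert (H1 : exp u >= exp m * (1 + (u - m))).
  { replace (exp u) with (exp m * exp (u - m)) by (rewrite <- exp_plus; f_equal; ring).
    pose proof (exp_ineq1_le (u - m)). pose proof (exp_pos m). nra. }
  assert (H2 : exp v >= exp m * (1 + (v - m))).
  { replace (exp v) with (exp m * exp (v - m)) by (rewrite <- exp_plus; f_equal; ring).
    pose proof (exp_ineq1_le (v - m)). pose proof (exp_pos m). nra. }
  assert (E : t * (1 + (u - m)) + (1 - t) * (1 + (v - m)) = 1) by (unfold m; ring).
  assert (t * exp u >= t * (exp m * (1 + (u - m)))) by (apply Rmult_ge_compat_l; lra).
  assert ((1 - t) * exp v >= (1 - t) * (exp m * (1 + (v - m)))) by (apply Rmult_ge_compat_l; lra).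
  assert (exp m = exp m * (t * (1 + (u - m)) + (1 - t) * (1 + (v - m)))) by (rewrite E; ring).
  lra.
Qed.

Lemma Ssum_convex a n w x y t : 0 <= t <= 1 ->
  Ssum a n w (padd (pscale t x) (pscale (1 - t) y)) <= t * Ssum a n w x + (1 - t) * Ssum a n w y.
Proof.
  intros Ht. unfold Ssum. rewrite <- !fsum_scale, <- fsum_add.
  apply fsum_le. intros i _.
  unfold dot, padd, pscale; simpl.
  set (d1 := fst (a i) * fst x + snd (a i) * snd x).
  set (d2 := fst (a i) * fst y + snd (a i) * snd y).
  replace (w * (fst (a i) * (t * fst x + (1 - t) * fst y) + snd (a i) * (t * snd x + (1 - t) * snd y) - 1))
    with (t * (w * (d1 - 1)) + (1 - t) * (w * (d2 - 1))) by (unfold d1, d2; ring).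
  replace (w * (- (fst (a i) * (t * fst x + (1 - t) * fst y) + snd (a i) * (t * snd x + (1 - t) * snd y)) - 1))
    with (t * (w * (- d1 - 1)) + (1 - t) * (w * (- d2 - 1))) by (unfold d1, d2; ring).
  pose proof (exp_convex t (w * (d1 - 1)) (w * (d2 - 1)) Ht).
  pose proof (exp_convex t (w * (- d1 - 1)) (w * (- d2 - 1)) Ht).
  lra.
Qed.

Lemma Ssum_sym a n w x : Ssum a n w (- fst x, - snd x) = Ssum a n w x.
Proof.
  unfold Ssum. apply fsum_ext. intros i _. unfold dot; simpl.
  rewrite Rplus_comm. f_equal; f_equal; f_equal; ring.
Qed.

Lemma exp_le1 u : u <= 0 -> exp u <= 1.
Proof. intros H. destruct H as [H|H]. left. rewrite <- exp_0. apply exp_increasing; auto. rewrite H, exp_0; lra. Qed.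

Lemma Ssum_small a n w x : 0 < w -> (forall i, (i < n)%nat -> Rabs (dot (a i) x) <= 1) ->
  Ssum a n w x <= 2 * INR n.
Proof.
  intros Hw H. unfold Ssum. replace (2 * INR n) with (INR n * 2) by ring. rewrite <- fsum_const.
  apply fsum_le. intros i Hi. cbv beta. specialize (H i Hi).
  apply abs_le_inv in H.
  assert (exp (w * (dot (a i) x - 1)) <= 1).
{ apply exp_le1. nra. }
  assert (exp (w * (- dot (a i) x - 1)) <= 1).
{ apply exp_le1. nra. }
  lra.
Qed.

Lemma exp_le_ln u c : 0 < c -> exp u <= c -> u <= ln c.
Proof.
  intros Hc H. destruct (Rle_or_lt u (ln c)) as [|H']; auto.
  apply exp_increasing in H'. rewrite exp_ln in H' by auto. lra.
Qed.

Lemma Ssum_bound a n w x : 0 < w -> (0 < n)%nat -> Ssum a n w x <= 2 * INR n ->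
  forall i, (i < n)%nat -> Rabs (dot (a i) x) <= 1 + ln (2 * INR n) / w.
Proof.
  intros Hw Hn H i Hi. pose proof (lt_0_INR n Hn).
  assert (Hle : exp (w * (dot (a i) x - 1)) + exp (w * (- dot (a i) x - 1)) <= 2 * INR n).
  { eapply Rle_trans; [| apply H]. unfold Ssum.
    apply (fsum_ge_term (fun i => exp (w * (dot (a i) x - 1)) + exp (w * (- dot (a i) x - 1)))); auto.
    intros; pose proof (exp_pos (w * (dot (a i0) x - 1))); pose proof (exp_pos (w * (- dot (a i0) x - 1))); lra. }
  pose proof (exp_pos (w * (dot (a i) x - 1))); pose proof (exp_pos (w * (- dot (a i) x - 1))).
  assert (h1 : w * (dot (a i) x - 1) <= ln (2 * INR n)) by (apply exp_le_ln; lra).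
  assert (h2 : w * (- dot (a i) x - 1) <= ln (2 * INR n)) by (apply exp_le_ln; lra).
  assert (e : ln (2 * INR n) / w * w = ln (2 * INR n)) by (field; lra).
  assert (- dot (a i) x - 1 <= ln (2 * INR n) / w) by (apply (Rmult_le_reg_l w); [lra| nra]).
  assert (dot (a i) x - 1 <= ln (2 * INR n) / w) by (apply (Rmult_le_reg_l w); [lra| nra]).
  apply Rabs_le. lra.
Qed.

Lemma exp_lip u v : exp u <= exp v + exp u * Rabs (u - v).
Proof.
  assert (H : exp v >= exp u * (1 + (v - u))).
  { replace (exp v) with (exp u * exp (v - u)) by (rewrite <- exp_plus; f_equal; ring).
    pose proof (exp_ineq1_le (v - u)). pose proof (exp_pos u). nra. }
  pose proof (exp_pos u).
  assert (u - v <= Rabs (u - v)) by apply RRle_abs.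
  nra.
Qed.

Lemma dot_diff_bound (b x y : pt) : Rabs (dot b x - dot b y) <= (Rabs (fst b) + Rabs (snd b)) * dist2 x y.
Proof.
  unfold dot.
  replace (fst b * fst x + snd b * snd x - (fst b * fst y + snd b * snd y))
    with (fst b * (fst x - fst y) + snd b * (snd x - snd y)) by ring.
  eapply Rle_trans; [apply Rabs_triang|]. rewrite !Rabs_mult.
  pose proof (dist2_ge1 x y); pose proof (dist2_ge2 x y).
  pose proof (Rabs_pos (fst b)); pose proof (Rabs_pos (snd b)).
  nra.
Qed.

Lemma Ssum_closed a n w x B : 0 < w ->
  (forall eps, 0 < eps -> exists y, Ssum a n w y <= B /\ dist2 x y < eps) -> Ssum a n w x <= B.
Proof.
  intros Hw H.
  set (A := fsum (fun i => Rabs (fst (a i)) + Rabs (snd (a i))) n).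
  set (L := w * (A + 1)).
  assert (HA : 0 <= A) by (apply fsum_nonneg; intros; pose proof (Rabs_pos (fst (a i))); pose proof (Rabs_pos (snd (a i))); lra).
  assert (HL : 0 < L) by (unfold L; nra).
  assert (key : forall y, Ssum a n w x <= Ssum a n w y + Ssum a n w x * (L * dist2 x y)).
  { intros y. rewrite (Rmult_comm (Ssum a n w x)). unfold Ssum. rewrite <- fsum_scale, <- fsum_add. apply fsum_le. intros i Hi. cbv beta.
    assert (Hai : Rabs (fst (a i)) + Rabs (snd (a i)) <= A).
    { apply (fsum_ge_term (fun i => Rabs (fst (a i)) + Rabs (snd (a i)))); auto.
      intros; pose proof (Rabs_pos (fst (a i0))); pose proof (Rabs_pos (snd (a i0))); lra. }
    pose proof (dot_diff_bound (a i) x y) as Hd.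
    assert (Hdist : 0 <= dist2 x y) by (unfold dist2; apply sqrt_pos).
    assert (Hb : Rabs (dot (a i) x - dot (a i) y) <= L * dist2 x y / w).
    { unfold L. replace (w * (A + 1) * dist2 x y / w) with ((A + 1) * dist2 x y) by (field; lra). nra. }
    assert (E1 : Rabs (w * (dot (a i) x - 1) - w * (dot (a i) y - 1)) <= L * dist2 x y).
    { replace (w * (dot (a i) x - 1) - w * (dot (a i) y - 1)) with (w * (dot (a i) x - dot (a i) y)) by ring.
      rewrite Rabs_mult, (Rabs_right w) by lra.
      replace (L * dist2 x y) with (w * (L * dist2 x y / w)) by (field; lra).
      apply Rmult_le_compat_l; lra. }
    assert (E2 : Rabs (w * (- dot (a i) x - 1) - w * (- dot (a i) y - 1)) <= L * dist2 x y).
    { replace (w * (- dot (a i) x - 1) - w * (- dot (a i) y - 1)) with (- (w * (dot (a i) x - dot (a i) y))) by ring.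
      rewrite Rabs_Ropp, Rabs_mult, (Rabs_right w) by lra.
      replace (L * dist2 x y) with (w * (L * dist2 x y / w)) by (field; lra).
      apply Rmult_le_compat_l; lra. }
    pose proof (exp_lip (w * (dot (a i) x - 1)) (w * (dot (a i) y - 1))).
    pose proof (exp_lip (w * (- dot (a i) x - 1)) (w * (- dot (a i) y - 1))).
    pose proof (exp_pos (w * (dot (a i) x - 1))). pose proof (exp_pos (w * (- dot (a i) x - 1))).
    nra. }
  assert (HS : 0 < Ssum a n w x \/ Ssum a n w x <= 0) by lra.
  destruct HS as [HS|HS].
  2:{ destruct (H 1 ltac:(lra)) as [y [Hy _]].
      assert (0 <= Ssum a n w y). { unfold Ssum; apply fsum_nonneg; intros.
        pose proof (exp_pos (w * (dot (a i) y - 1))); pose proof (exp_pos (w * (- dot (a i) y - 1))); lra. }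
      lra. }
  destruct (Rle_or_lt (Ssum a n w x) B) as [|Hc]; auto.
  set (Sx := Ssum a n w x) in *.
  set (d := (Sx - B) / (2 * Sx * L)).
  assert (Hd : 0 < d) by (unfold d; apply Rdiv_lt_0_compat; nra).
  destruct (H d Hd) as [y [Hy Hxy]].
  specialize (key y).
  assert (Sx * (L * dist2 x y) < Sx * (L * d)).
  { apply Rmult_lt_compat_l; auto. apply Rmult_lt_compat_l; auto. }
  assert (Sx * (L * d) = (Sx - B) / 2) by (unfold d; field; lra).
  lra.
Qed.

Lemma pt_eq (x y : pt) : fst x = fst y -> snd x = snd y -> x = y.
Proof. destruct x, y; simpl; intros; subst; auto. Qed.

Lemma ball_from_K2 K : K2 K -> exists rho, 0 < rho /\ forall y, Rabs (fst y) + Rabs (snd y) < rho -> K y.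
Proof.
  intros [Hc [_ [[x0 [r [Hr Hb]]] Hs]]].
  exists r. split; auto. intros y Hy.
  assert (H1 : K (fst x0 + fst y, snd x0 + snd y)).
  { apply Hb. eapply Rle_lt_trans; [apply dist2_le|]. simpl.
    replace (fst x0 - (fst x0 + fst y)) with (- fst y) by ring.
    replace (snd x0 - (snd x0 + snd y)) with (- snd y) by ring.
    rewrite !Rabs_Ropp; auto. }
  assert (H2 : K (fst x0 - fst y, snd x0 - snd y)).
  { apply Hb. eapply Rle_lt_trans; [apply dist2_le|]. simpl.
    replace (fst x0 - (fst x0 - fst y)) with (fst y) by ring.
    replace (snd x0 - (snd x0 - snd y)) with (snd y) by ring. auto. }
  apply Hs in H2. simpl in H2.
  pose proof (Hc _ _ (1/2) H1 H2 ltac:(lra)) as H3.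
  replace y with (padd (pscale (1 / 2) (fst x0 + fst y, snd x0 + snd y))
         (pscale (1 - 1 / 2) (- (fst x0 - fst y), - (snd x0 - snd y)))); auto.
  apply pt_eq; simpl; field.
Qed.

Lemma scale_in K y t : convex K -> K (0, 0) -> K y -> 0 <= t <= 1 -> K (pscale t y).
Proof.
  intros Hc H0 Hy Ht.
  replace (pscale t y) with (padd (pscale t y) (pscale (1 - t) (0, 0))).
  apply Hc; auto. apply pt_eq; simpl; ring.
Qed.

Lemma div_le_div a b c d : 0 < b -> 0 < d -> a * d <= c * b -> a / b <= c / d.
Proof.
  intros Hb Hd H.
  replace (a / b) with ((a * d) * / (b * d)) by (field; lra).
  replace (c / d) with ((c * b) * / (b * d)) by (field; lra).
  apply Rmult_le_compat_r; auto. left; apply Rinv_0_lt_compat; nra.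
Qed.

Section HBsec.
Variable K : pt -> Prop.
Variables rho M : R.
Hypothesis Hconv : convex K.
Hypothesis Hsym : symmetric K.
Hypothesis Hrho : 0 < rho.
Hypothesis Hball : forall y, Rabs (fst y) + Rabs (snd y) < rho -> K y.
Hypothesis Hbd : forall y, K y -> dist2 y (0, 0) <= M.

Lemma K0 : K (0, 0).
Proof. apply Hball; simpl; rewrite Rabs_R0; lra. Qed.

Lemma HB (u : pt) : 1 <= fst u ^ 2 + snd u ^ 2 ->
  exists s f, 0 < s /\ s <= M /\ (forall th, 0 <= th < s -> K (pscale th u)) /\
    (forall y, K y -> dot f y <= 1) /\ dot f u = / s.
Proof.
  intros Hu.
  set (E := fun th => 0 <= th /\ K (pscale th u)).
  assert (HEb : forall th, E th -> th <= M).
  { intros th [Hth Hk]. apply Hbd in Hk.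
    unfold dist2, pscale in Hk. cbn [fst snd] in Hk.
    rewrite <- (sqrt_square th) by lra.
    eapply Rle_trans; [| apply Hk]. apply sqrt_le_1_alt.
    replace ((th * fst u - 0) ^ 2 + (th * snd u - 0) ^ 2) with ((th * th) * (fst u ^ 2 + snd u ^ 2)) by ring.
    assert (0 <= th * th) by nra. nra. }
  assert (Hsum : 0 < Rabs (fst u) + Rabs (snd u)).
  { destruct (Req_dec (fst u) 0) as [e1|e1]; [destruct (Req_dec (snd u) 0) as [e2|e2]|].
    - rewrite e1, e2 in Hu. lra.
    - pose proof (Rabs_pos_lt _ e2); pose proof (Rabs_pos (fst u)); lra.
    - pose proof (Rabs_pos_lt _ e1); pose proof (Rabs_pos (snd u)); lra. }
  set (th0 := rho / (2 * (Rabs (fst u) + Rabs (snd u)))).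
  assert (Hth0 : 0 < th0) by (unfold th0; apply Rdiv_lt_0_compat; lra).
  assert (Hth0b : th0 * (Rabs (fst u) + Rabs (snd u)) < rho) by (unfold th0; field_simplify; lra).
  assert (HE0 : E th0).
  { split; [lra|]. apply Hball. simpl. rewrite !Rabs_mult, (Rabs_right th0) by lra. lra. }
  destruct (completeness E) as [s [Hub Hlub]].
  { exists M. intros th Hth. apply HEb; auto. }
  { exists th0; auto. }
  assert (Hs0 : th0 <= s) by (apply Hub; auto).
  assert (HsM : s <= M) by (apply Hlub; intros th Hth; apply HEb; auto).
  assert (Hin : forall th, 0 <= th < s -> K (pscale th u)).
  { intros th Hth.
    destruct (classic (exists th', E th' /\ th < th')) as [[th' [[Hth'0 Hk] Hlt]]|Hno].
    - replace (pscale th u) with (pscale (th / th') (pscale th' u)).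
      apply scale_in; auto. apply K0. split; [apply Rmult_le_pos; [lra| left; apply Rinv_0_lt_compat; lra]|].
      apply (Rmult_le_reg_r th'); [lra|]. field_simplify; lra.
      apply pt_eq; simpl; field; lra.
    - assert (is_upper_bound E th).
      { intros z Hz. destruct (Rle_or_lt z th); auto. exfalso; apply Hno; exists z; auto. }
      apply Hlub in H. lra. }
  assert (HinE : forall th, K (pscale th u) -> th <= s).
  { intros th Hk. destruct (Rle_or_lt 0 th). apply Hub; split; auto. lra. }
  set (n := fst u ^ 2 + snd u ^ 2).
  assert (Hn : 0 < n) by (unfold n; lra).
  set (q := (- snd u, fst u)).
  set (al := fun y : pt => dot y u / n).
  set (be := fun y : pt => dot y q / n).
  assert (Hdec : forall y, y = padd (pscale (al y) u) (pscale (be y) q)).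
  { intros y. unfold al, be, dot, q, n; apply pt_eq; simpl; field; lra. }
  assert (Hdec0 : forall y, be y = 0 -> y = pscale (al y) u).
  { intros y Hb. rewrite (Hdec y) at 1. rewrite Hb. apply pt_eq; simpl; ring. }
  assert (Hal_le : forall y, K y -> be y = 0 -> al y <= s).
  { intros y Hy Hb. apply HinE. rewrite <- Hdec0; auto. }
  assert (Hkey : forall y1 y2, K y1 -> K y2 -> be y1 < 0 -> 0 < be y2 ->
            (al y1 / s - 1) / (- be y1) <= (1 - al y2 / s) / be y2).
  { intros y1 y2 H1 H2 Hb1 Hb2.
    set (t := be y2 / (be y2 - be y1)).
    assert (Ht : 0 <= t <= 1).
    { unfold t; split. apply Rmult_le_pos; [lra| left; apply Rinv_0_lt_compat; lra].
      apply (Rmult_le_reg_r (be y2 - be y1)); [lra|]. field_simplify; lra. }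
    pose proof (Hconv _ _ _ H1 H2 Ht) as Hz.
    set (z := padd (pscale t y1) (pscale (1 - t) y2)) in *.
    assert (Hbz : be z = 0).
    { assert (e : be z = t * be y1 + (1 - t) * be y2).
      { unfold z, be, dot, padd, pscale; simpl. field. lra. }
      rewrite e. unfold t. field. lra. }
    assert (Halz : al z = t * al y1 + (1 - t) * al y2).
    { unfold z, al, dot, padd, pscale; simpl. field. lra. }
    pose proof (Hal_le z Hz Hbz) as Hz'. rewrite Halz in Hz'.
    assert (Hm : be y2 * al y1 - be y1 * al y2 <= s * (be y2 - be y1)).
    { unfold t in Hz'.
      assert (e : be y2 / (be y2 - be y1) * al y1 + (1 - be y2 / (be y2 - be y1)) * al y2
                  = (be y2 * al y1 - be y1 * al y2) / (be y2 - be y1)) by (field; lra).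
      rewrite e in Hz'.
      apply (Rmult_le_compat_r (be y2 - be y1)) in Hz'; [|lra].
      replace ((be y2 * al y1 - be y1 * al y2) / (be y2 - be y1) * (be y2 - be y1))
        with (be y2 * al y1 - be y1 * al y2) in Hz' by (field; lra). lra. }
    apply div_le_div; try lra.
    assert (s > 0) by lra.
    replace ((al y1 / s - 1) * be y2) with ((be y2 * al y1) / s - be y2) by (field; lra).
    replace ((1 - al y2 / s) * - be y1) with (- be y1 + (be y1 * al y2) / s) by (field; lra).
    assert ((be y2 * al y1 - be y1 * al y2) / s <= be y2 - be y1).
    { apply (Rmult_le_reg_r s); [lra|]. field_simplify; lra. }
    replace ((be y2 * al y1 - be y1 * al y2) / s) with (be y2 * al y1 / s - be y1 * al y2 / s) in H by (field; lra).
    lra. }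
  set (E1 := fun z => exists y, K y /\ be y < 0 /\ z = (al y / s - 1) / (- be y)).
  set (y2 := pscale th0 q).
  assert (Hy2 : K y2).
  { apply Hball. unfold y2, q; simpl. rewrite !Rabs_mult, Rabs_Ropp, (Rabs_right th0) by lra. lra. }
  assert (Hby2 : 0 < be y2).
  { assert (e : be y2 = th0) by (unfold be, y2, q, dot, n; simpl; field; nra). lra. }
  set (y1 := (- fst y2, - snd y2)).
  assert (Hy1 : K y1) by (apply Hsym; auto).
  assert (Hby1 : be y1 < 0).
  { assert (e : be y1 = - be y2) by (unfold be, y1, dot; simpl; field; lra). lra. }
  destruct (completeness E1) as [c [Hcub Hclub]].
  { exists ((1 - al y2 / s) / be y2). intros z [y [Hy [Hb Hz]]]. subst z. apply Hkey; auto. }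
  { exists ((al y1 / s - 1) / (- be y1)). exists y1; auto. }
  exists s, ((fst u / s + c * fst q) / n, (snd u / s + c * snd q) / n).
  assert (Hdotf : forall y, dot ((fst u / s + c * fst q) / n, (snd u / s + c * snd q) / n) y = al y / s + c * be y).
  { intros y. unfold al, be, dot, q. simpl. field. split; lra. }
  split; [lra|]. split; [lra|]. split; [auto|]. split.
  - intros y Hy. rewrite Hdotf.
    destruct (Rtotal_order (be y) 0) as [Hb|[Hb|Hb]].
    + assert (Hz : E1 ((al y / s - 1) / (- be y))) by (exists y; auto).
      apply Hcub in Hz.
      assert (e : (al y / s - 1) / (- be y) * be y = 1 - al y / s) by (field; lra).
      assert (c * be y <= (al y / s - 1) / (- be y) * be y).
      { rewrite (Rmult_comm c), (Rmult_comm _ (be y)). apply Rmult_le_compat_neg_l; lra. }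
      lra.
    + rewrite Hb. pose proof (Hal_le y Hy Hb).
      assert (al y / s <= 1). { apply (Rmult_le_reg_r s); [lra|]. field_simplify; lra. }
      lra.
    + assert (c <= (1 - al y / s) / be y).
      { apply Hclub. intros z [y' [Hy' [Hb' Hz]]]. subst z. apply Hkey; auto. }
      assert (c * be y <= (1 - al y / s) / be y * be y) by (apply Rmult_le_compat_r; lra).
      replace ((1 - al y / s) / be y * be y) with (1 - al y / s) in H0 by (field; lra).
      lra.
  - rewrite Hdotf. unfold al, be, dot, q, n; simpl. field. split; lra.
Qed.

End HBsec.

Section Core.
Variable K : pt -> Prop.
Variables rho M g im r : R.
Hypothesis Hrho : 0 < rho.
Hypothesis Hball : forall y, Rabs (fst y) + Rabs (snd y) < rho -> K y.
Hypothesis HM : 0 < M.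
Hypothesis Hg : 0 < g <= 1/2.
Hypothesis Him : 0 < im.
Hypothesis H1 : 2 * M * im <= g * rho.
Hypothesis H2 : 3 * M * (8 * g + im) <= r.

Lemma fcomp_bound (f : pt) : (forall y, K y -> dot f y <= 1) ->
  Rabs (fst f) <= 2 / rho /\ Rabs (snd f) <= 2 / rho.
Proof.
  intros Hf.
  assert (Ha : forall y, Rabs (fst y) + Rabs (snd y) < rho -> dot f y <= 1) by (intros; apply Hf, Hball; auto).
  assert (e1 : Rabs (rho / 2) = rho / 2) by (apply Rabs_right; lra).
  assert (e2 : Rabs (- (rho / 2)) = rho / 2) by (rewrite Rabs_Ropp; apply Rabs_right; lra).
  pose proof (Ha (rho / 2, 0)) as a1. pose proof (Ha (- (rho / 2), 0)) as a2.
  pose proof (Ha (0, rho / 2)) as a3. pose proof (Ha (0, - (rho / 2))) as a4.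
  unfold dot in *; simpl in *. rewrite Rabs_R0, ?e1, ?e2 in *.
  specialize (a1 ltac:(lra)); specialize (a2 ltac:(lra)); specialize (a3 ltac:(lra)); specialize (a4 ltac:(lra)).
  assert (e : 2 / rho * (rho / 2) = 1) by (field; lra).
  split; apply Rabs_le; split; nra.
Qed.

Lemma core (u : pt) s (f : pt) (x : pt) lam :
  Rabs (fst u) <= 1 -> Rabs (snd u) <= 1 ->
  0 < s -> s <= M -> (forall th, 0 <= th < s -> K (pscale th u)) ->
  (forall y, K y -> dot f y <= 1) -> dot f u = / s ->
  0 < lam -> Rabs (fst x - lam * fst u) + Rabs (snd x - lam * snd u) <= lam * im ->
  Rabs (dot f x) <= 1 + g ->
  exists c, K c /\ dist2 c x <= r.
Proof.
  intros Hu1 Hu2 Hs HsM Hin Hf Hfu Hl Hx Hfx.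
  destruct (fcomp_bound f Hf) as [Hf1 Hf2].
  set (B := 2 / rho) in *.
  assert (HB : 0 < B) by (unfold B; apply Rdiv_lt_0_compat; lra).
  assert (Hd : dot f x = lam / s + dot f (fst x - lam * fst u, snd x - lam * snd u)).
  { unfold dot in *; simpl. rewrite <- (Rmult_1_r lam) at 1. rewrite <- (Rinv_r s) by lra.
    rewrite <- Hfu. field. lra. }
  assert (Hr : Rabs (dot f (fst x - lam * fst u, snd x - lam * snd u)) <= B * (lam * im)).
  { unfold dot; simpl. eapply Rle_trans; [apply Rabs_triang|]. rewrite !Rabs_mult.
    pose proof (Rabs_pos (fst x - lam * fst u)); pose proof (Rabs_pos (snd x - lam * snd u)).
    pose proof (Rabs_pos (fst f)); pose proof (Rabs_pos (snd f)). nra. }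
  assert (HBim : B * im * s <= g).
  { unfold B. assert (2 / rho * im * s <= 2 / rho * im * M).
    { apply Rmult_le_compat_l; auto. apply Rmult_le_pos; [left; apply Rdiv_lt_0_compat; lra| lra]. }
    assert (2 / rho * im * M = (2 * M * im) / rho) by (field; lra).
    assert ((2 * M * im) / rho <= g).
    { apply (Rmult_le_reg_r rho); auto. replace (2 * M * im / rho * rho) with (2 * M * im) by (field; lra). lra. }
    lra. }
  assert (Hlam : lam * (1 - g) <= s * (1 + g)).
  { apply abs_le_inv in Hfx. apply abs_le_inv in Hr.
    assert (lam / s - B * (lam * im) <= 1 + g) by lra.
    assert (lam - B * lam * im * s <= s * (1 + g)).
    { apply (Rmult_le_compat_r s) in H; [|lra].
      replace ((lam / s - B * (lam * im)) * s) with (lam - B * lam * im * s) in H by (field; lra). lra. }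
    assert (B * lam * im * s <= lam * g).
    { replace (B * lam * im * s) with (lam * (B * im * s)) by ring. apply Rmult_le_compat_l; lra. }
    lra. }
  set (kap := (1 - g) / (1 + g) ^ 2).
  set (th := lam * kap).
  assert (Hkap : 0 < kap) by (unfold kap; apply Rdiv_lt_0_compat; nra).
  assert (Hkap1 : 1 - kap <= 4 * g).
  { unfold kap. assert (0 < (1 + g) ^ 2) by nra.
    assert ((1 - g) / (1 + g) ^ 2 >= 1 - 4 * g).
    { apply Rle_ge. apply (Rmult_le_reg_r ((1 + g) ^ 2)); auto.
      replace ((1 - g) / (1 + g) ^ 2 * (1 + g) ^ 2) with (1 - g) by (field; lra). nra. }
    lra. }
  assert (Hkap2 : kap <= 1).
  { unfold kap. apply (Rmult_le_reg_r ((1 + g) ^ 2)); [nra|].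
    replace ((1 - g) / (1 + g) ^ 2 * (1 + g) ^ 2) with (1 - g) by (field; lra). nra. }
  assert (Hth : 0 <= th < s).
  { unfold th. split; [nra|].
    assert (lam * kap * (1 - g) <= s * (1 + g) * kap) by (replace (lam * kap * (1 - g)) with (lam * (1 - g) * kap) by ring; apply Rmult_le_compat_r; lra).
    assert (s * (1 + g) * kap = s * (1 - g) / (1 + g)) by (unfold kap; field; lra).
    assert (lam * kap <= s / (1 + g)).
    { apply (Rmult_le_reg_r (1 - g)); [lra|]. replace (s / (1 + g) * (1 - g)) with (s * (1 - g) / (1 + g)) by (field; lra). lra. }
    assert (s / (1 + g) < s).
    { apply (Rmult_lt_reg_r (1 + g)); [lra|]. replace (s / (1 + g) * (1 + g)) with s by (field; lra). nra. }
    lra. }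
  exists (pscale th u). split; [apply Hin; auto|].
  eapply Rle_trans; [apply dist2_le|]. simpl.
  assert (e1 : th * fst u - fst x = (th - lam) * fst u - (fst x - lam * fst u)) by ring.
  assert (e2 : th * snd u - snd x = (th - lam) * snd u - (snd x - lam * snd u)) by ring.
  rewrite e1, e2.
  assert (Hlt : Rabs (th - lam) = lam * (1 - kap)) by (unfold th; rewrite Rabs_left1; [ring| nra]).
  assert (t1 : Rabs ((th - lam) * fst u - (fst x - lam * fst u)) <= lam * (1 - kap) + Rabs (fst x - lam * fst u)).
  { unfold Rminus at 1. eapply Rle_trans; [apply Rabs_triang|]. rewrite Rabs_Ropp, Rabs_mult, Hlt.
    assert (0 <= lam * (1 - kap)) by nra. nra. }
  assert (t2 : Rabs ((th - lam) * snd u - (snd x - lam * snd u)) <= lam * (1 - kap) + Rabs (snd x - lam * snd u)).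
  { unfold Rminus at 1. eapply Rle_trans; [apply Rabs_triang|]. rewrite Rabs_Ropp, Rabs_mult, Hlt.
    assert (0 <= lam * (1 - kap)) by nra. nra. }
  assert (Hl3 : lam <= 3 * M).
  { assert (lam * (1 - g) <= M * (1 + g)) by nra. nra. }
  assert (lam * (2 * (1 - kap) + im) <= 3 * M * (8 * g + im)).
  { assert (0 <= 2 * (1 - kap) + im) by lra.
    assert (lam * (2 * (1 - kap) + im) <= 3 * M * (2 * (1 - kap) + im)) by (apply Rmult_le_compat_r; lra).
    assert (3 * M * (2 * (1 - kap) + im) <= 3 * M * (8 * g + im)) by (apply Rmult_le_compat_l; lra).
    lra. }
  lra.
Qed.

End Core.

Definition udir (m k : nat) : pt :=
  if (k <=? 2 * m)%nat then (INR k / INR m - 1, 1) else (1, INR (k - (2 * m + 1)) / INR m - 1).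

Lemma udir_norm m k : 1 <= fst (udir m k) ^ 2 + snd (udir m k) ^ 2.
Proof.
  unfold udir. destruct (k <=? 2 * m)%nat; cbn [fst snd].
  - pose proof (pow2_ge_0 (INR k / INR m - 1)). lra.
  - pose proof (pow2_ge_0 (INR (k - (2 * m + 1)) / INR m - 1)). lra.
Qed.

Lemma grid N s : 0 <= s <= INR N -> exists k, (k <= N)%nat /\ Rabs (s - INR k) <= 1.
Proof.
  induction N; intros Hs.
  - exists 0%nat. split; auto. simpl in *. replace (s - 0) with 0 by lra. rewrite Rabs_R0; lra.
  - rewrite S_INR in Hs. destruct (Rle_or_lt s (INR N)).
    + destruct (IHN ltac:(lra)) as [k [Hk Hk']]. exists k; split; auto.
    + exists (S N). split; auto. rewrite S_INR. apply Rabs_le. lra.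
Qed.

Section CL.
Variable K : pt -> Prop.
Variables rho M g r : R.
Variable m : nat.
Hypothesis Hsym : symmetric K.
Hypothesis Hrho : 0 < rho.
Hypothesis Hball : forall y, Rabs (fst y) + Rabs (snd y) < rho -> K y.
Hypothesis HM : 0 < M.
Hypothesis Hg : 0 < g <= 1/2.
Hypothesis Hm : (0 < m)%nat.
Hypothesis H1 : 2 * M * / INR m <= g * rho.
Hypothesis H2 : 3 * M * (8 * g + / INR m) <= r.
Variable F : nat -> pt.
Variable S : nat -> R.
Hypothesis HF : forall k, 0 < S k /\ S k <= M /\ (forall th, 0 <= th < S k -> K (pscale th (udir m k))) /\
   (forall y, K y -> dot (F k) y <= 1) /\ dot (F k) (udir m k) = / S k.

Let Hmpos : 0 < INR m := lt_0_INR m Hm.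

Lemma CL1 x : 0 < snd x -> Rabs (fst x) <= snd x ->
  (forall k, (k < 4 * m + 2)%nat -> Rabs (dot (F k) x) <= 1 + g) -> exists c, K c /\ dist2 c x <= r.
Proof.
  intros Hx2 Hx1 Hk.
  set (t := fst x / snd x).
  assert (Ht : -1 <= t <= 1).
  { apply abs_le_inv in Hx1. unfold t. split.
    - apply (Rmult_le_reg_r (snd x)); auto. replace (fst x / snd x * snd x) with (fst x) by (field; lra). lra.
    - apply (Rmult_le_reg_r (snd x)); auto. replace (fst x / snd x * snd x) with (fst x) by (field; lra). lra. }
  destruct (grid (2 * m) (INR m * (t + 1))) as [k [Hk2 Hk3]].
  { rewrite mult_INR; simpl INR. split; nra. }
  destruct (HF k) as [Hs [HsM [Hin [Hf Hfu]]]].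
  assert (Hu : udir m k = (INR k / INR m - 1, 1)).
  { unfold udir. replace ((k <=? 2 * m)%nat) with true; auto. symmetry; apply Nat.leb_le; auto. }
  assert (HkR : INR k <= 2 * INR m) by (replace (2 * INR m) with (INR (2 * m)) by (rewrite mult_INR; simpl; ring); apply le_INR; auto).
  pose proof (pos_INR k).
  apply (core K rho M g (/ INR m) r Hrho Hball HM Hg ltac:(apply Rinv_0_lt_compat; lra) H1 H2
           (udir m k) (S k) (F k) x (snd x)); auto.
  - rewrite Hu; simpl. apply Rabs_le. split.
    + apply (Rmult_le_reg_r (INR m)); auto. replace ((INR k / INR m - 1) * INR m) with (INR k - INR m) by (field; lra). lra.
    + apply (Rmult_le_reg_r (INR m)); auto. replace ((INR k / INR m - 1) * INR m) with (INR k - INR m) by (field; lra). lra.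
  - rewrite Hu; simpl. rewrite Rabs_R1; lra.
  - rewrite Hu; simpl. replace (snd x - snd x * 1) with 0 by ring. rewrite Rabs_R0, Rplus_0_r.
    replace (fst x - snd x * (INR k / INR m - 1)) with (snd x * ((INR m * (t + 1) - INR k) / INR m)) by (unfold t; field; split; lra).
    rewrite Rabs_mult, (Rabs_right (snd x)) by lra.
    apply Rmult_le_compat_l; [lra|].
    unfold Rdiv. rewrite Rabs_mult, (Rabs_right (/ INR m)) by (left; apply Rinv_0_lt_compat; lra).
    rewrite <- (Rmult_1_l (/ INR m)) at 2. apply Rmult_le_compat_r; [left; apply Rinv_0_lt_compat; lra| auto].
  - apply Hk. lia.
Qed.

Lemma CL2 x : 0 < fst x -> Rabs (snd x) <= fst x ->
  (forall k, (k < 4 * m + 2)%nat -> Rabs (dot (F k) x) <= 1 + g) -> exists c, K c /\ dist2 c x <= r.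
Proof.
  intros Hx2 Hx1 Hk.
  set (t := snd x / fst x).
  assert (Ht : -1 <= t <= 1).
  { apply abs_le_inv in Hx1. unfold t. split.
    - apply (Rmult_le_reg_r (fst x)); auto. replace (snd x / fst x * fst x) with (snd x) by (field; lra). lra.
    - apply (Rmult_le_reg_r (fst x)); auto. replace (snd x / fst x * fst x) with (snd x) by (field; lra). lra. }
  destruct (grid (2 * m) (INR m * (t + 1))) as [k [Hk2 Hk3]].
  { rewrite mult_INR; simpl INR. split; nra. }
  set (k' := (2 * m + 1 + k)%nat).
  destruct (HF k') as [Hs [HsM [Hin [Hf Hfu]]]].
  assert (Hu : udir m k' = (1, INR k / INR m - 1)).
  { unfold udir. replace ((k' <=? 2 * m)%nat) with false. replace (k' - (2 * m + 1))%nat with k by (unfold k'; lia). reflexivity.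
    symmetry; apply Nat.leb_gt; unfold k'; lia. }
  assert (HkR : INR k <= 2 * INR m) by (replace (2 * INR m) with (INR (2 * m)) by (rewrite mult_INR; simpl; ring); apply le_INR; auto).
  pose proof (pos_INR k).
  apply (core K rho M g (/ INR m) r Hrho Hball HM Hg ltac:(apply Rinv_0_lt_compat; lra) H1 H2
           (udir m k') (S k') (F k') x (fst x)); auto.
  - rewrite Hu; simpl. rewrite Rabs_R1; lra.
  - rewrite Hu; simpl. apply Rabs_le. split.
    + apply (Rmult_le_reg_r (INR m)); auto. replace ((INR k / INR m - 1) * INR m) with (INR k - INR m) by (field; lra). lra.
    + apply (Rmult_le_reg_r (INR m)); auto. replace ((INR k / INR m - 1) * INR m) with (INR k - INR m) by (field; lra). lra.
  - rewrite Hu; simpl. replace (fst x - fst x * 1) with 0 by ring. rewrite Rabs_R0, Rplus_0_l.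
    replace (snd x - fst x * (INR k / INR m - 1)) with (fst x * ((INR m * (t + 1) - INR k) / INR m)) by (unfold t; field; split; lra).
    rewrite Rabs_mult, (Rabs_right (fst x)) by lra.
    apply Rmult_le_compat_l; [lra|].
    unfold Rdiv. rewrite Rabs_mult, (Rabs_right (/ INR m)) by (left; apply Rinv_0_lt_compat; lra).
    rewrite <- (Rmult_1_l (/ INR m)) at 2. apply Rmult_le_compat_r; [left; apply Rinv_0_lt_compat; lra| auto].
  - apply Hk. unfold k'. lia.
Qed.

Lemma dot_neg f x : dot f (- fst x, - snd x) = - dot f x.
Proof. unfold dot; simpl; ring. Qed.

Lemma CLneg x : (exists c, K c /\ dist2 c (- fst x, - snd x) <= r) -> exists c, K c /\ dist2 c x <= r.
Proof.
  intros [c [Hc Hd]]. exists (- fst c, - snd c). split; [apply Hsym; auto|].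
  replace (dist2 (- fst c, - snd c) x) with (dist2 c (- fst x, - snd x)); auto.
  unfold dist2; simpl. f_equal; ring.
Qed.

Lemma hyp_neg x : (forall k, (k < 4 * m + 2)%nat -> Rabs (dot (F k) x) <= 1 + g) ->
  (forall k, (k < 4 * m + 2)%nat -> Rabs (dot (F k) (- fst x, - snd x)) <= 1 + g).
Proof. intros H k Hk. rewrite dot_neg, Rabs_Ropp. auto. Qed.

Lemma CL x : (forall k, (k < 4 * m + 2)%nat -> Rabs (dot (F k) x) <= 1 + g) -> exists c, K c /\ dist2 c x <= r.
Proof.
  intros Hk.
  assert (Hr : 0 < r) by (assert (0 < / INR m) by (apply Rinv_0_lt_compat; lra); nra).
  destruct (Req_dec (fst x) 0) as [e1|e1]; [destruct (Req_dec (snd x) 0) as [e2|e2]|].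
  - exists (0, 0). split. apply Hball; simpl; rewrite Rabs_R0; lra.
    unfold dist2; cbn [fst snd]. rewrite e1, e2. replace ((0 - 0) ^ 2 + (0 - 0) ^ 2) with 0 by ring. rewrite sqrt_0; lra.
  - destruct (Rlt_or_le 0 (snd x)).
    + apply CL1; auto. rewrite e1, Rabs_R0; lra.
    + apply CLneg. apply CL1; simpl; [lra| |apply hyp_neg; auto]. rewrite e1, ?Ropp_0, Rabs_R0; lra.
  - destruct (Rle_or_lt (Rabs (snd x)) (Rabs (fst x))) as [Hab|Hab].
    + destruct (Rlt_or_le 0 (fst x)).
      * apply CL2; auto. rewrite (Rabs_right (fst x)) in Hab; lra.
      * apply CLneg. apply CL2; simpl; [lra| |apply hyp_neg; auto].
        rewrite Rabs_Ropp. rewrite (Rabs_left1 (fst x)) in Hab; lra.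
    + destruct (Rlt_or_le 0 (snd x)).
      * apply CL1; auto. rewrite (Rabs_right (snd x)) in Hab; lra.
      * apply CLneg. apply CL1; simpl.
        { assert (snd x <> 0). { intro e. rewrite e, Rabs_R0 in Hab. pose proof (Rabs_pos (fst x)); lra. } lra. }
        { rewrite Rabs_Ropp. rewrite (Rabs_left1 (snd x)) in Hab; lra. }
        apply hyp_neg; auto.
Qed.

End CL.

Definition normalized (K : pt -> Prop) (f : pt) :=
  (forall y, K y -> dot f y <= 1) /\ (forall e, 0 < e -> exists y, K y /\ 1 - e < dot f y).

Lemma dot_pscale c f y : dot (pscale c f) y = c * dot f y.
Proof. unfold dot, pscale; simpl; ring. Qed.

Lemma sigma_le K s1 s2 f1 f2 : 0 < s1 -> 0 < s2 -> normalized K f1 -> normalized K f2 ->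
  pscale s1 f1 = pscale s2 f2 -> s1 <= s2.
Proof.
  intros H1 H2 [N1 N1'] [N2 N2'] E.
  destruct (Rle_or_lt s1 s2) as [|Hlt]; auto. exfalso.
  destruct (N1' ((s1 - s2) / s1)) as [y [Hy Hd]].
  { apply Rdiv_lt_0_compat; lra. }
  assert (e : s1 * dot f1 y = s2 * dot f2 y) by (rewrite <- !dot_pscale, E; auto).
  pose proof (N2 y Hy).
  assert (s1 * (1 - (s1 - s2) / s1) = s2) by (field; lra).
  assert (s1 * (1 - (s1 - s2) / s1) < s1 * dot f1 y) by (apply Rmult_lt_compat_l; lra).
  nra.
Qed.

Lemma sigma_inj (i l : nat) tau : 0 < tau ->
  1 - tau * (INR i / (INR i + 1)) = 1 - tau * (INR l / (INR l + 1)) -> i = l.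
Proof.
  intros Ht E. pose proof (pos_INR i); pose proof (pos_INR l).
  assert (INR i / (INR i + 1) = INR l / (INR l + 1)).
  { apply (Rmult_eq_reg_l tau); lra. }
  apply INR_eq.
  assert (e1 : INR i / (INR i + 1) = 1 - / (INR i + 1)) by (field; lra).
  assert (e2 : INR l / (INR l + 1) = 1 - / (INR l + 1)) by (field; lra).
  assert (e3 : / (INR i + 1) = / (INR l + 1)) by lra.
  assert (INR i + 1 = INR l + 1) by (rewrite <- (Rinv_inv (INR i + 1)), <- (Rinv_inv (INR l + 1)), e3; auto).
  lra.
Qed.

Lemma bound_abs (c : pt) M : dist2 c (0, 0) <= M -> Rabs (fst c) <= M /\ Rabs (snd c) <= M.
Proof.
  intros H. pose proof (dist2_ge1 c (0, 0)); pose proof (dist2_ge2 c (0, 0)).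
  simpl in *. rewrite !Rminus_0_r in *. lra.
Qed.

Theorem proposition4p13 :
  forall U : (pt -> Prop) -> Prop,
    open_in_K2 U -> (exists C, U C) ->
    exists N : nat, (3 <= N)%nat /\
      forall j : nat, (N <= j)%nat -> exists C, Bphi j C /\ U C.
Proof.
  intros U [HU1 HU2] [C0 HC0].
  destruct (HU2 C0 HC0) as [eps [Heps Hopen]].
  pose proof (HU1 C0 HC0) as HK.
  destruct (ball_from_K2 C0 HK) as [rho [Hrho Hball]].
  destruct HK as [Hconv [[Hclosed [M0 HM0]] [Hint Hsym]]].
  set (M := Rabs M0 + 1).
  assert (HM : 0 < M) by (unfold M; pose proof (Rabs_pos M0); lra).
  assert (Hbd : forall y, C0 y -> dist2 y (0, 0) <= M).
  { intros y Hy. pose proof (HM0 y Hy). unfold M. pose proof (RRle_abs M0). lra. }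
  set (r := eps / 2).
  assert (Hr : 0 < r) by (unfold r; lra).
  set (g := Rmin (1 / 2) (r / (48 * M))).
  assert (Hg : 0 < g <= 1 / 2).
  { unfold g. split. apply Rmin_glb_lt; [lra| apply Rdiv_lt_0_compat; lra]. apply Rmin_l. }
  assert (Hg2 : 48 * M * g <= r).
  { assert (g <= r / (48 * M)) by apply Rmin_r.
    apply (Rmult_le_compat_l (48 * M)) in H; [|lra].
    replace (48 * M * (r / (48 * M))) with r in H by (field; lra). lra. }
  destruct (INR_archimed 1 (2 * M / (g * rho) + 6 * M / r + 1) ltac:(lra)) as [m Hm].
  rewrite Rmult_1_r in Hm.
  assert (Hm1 : 2 * M / (g * rho) > 0) by (apply Rdiv_lt_0_compat; nra).
  assert (Hm2 : 6 * M / r > 0) by (apply Rdiv_lt_0_compat; nra).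
  assert (Hm0 : (0 < m)%nat).
  { destruct m; [simpl in Hm; lra| lia]. }
  assert (HmR : 0 < INR m) by (apply lt_0_INR; auto).
  assert (H1 : 2 * M * / INR m <= g * rho).
  { apply (Rmult_le_reg_r (INR m)); auto. replace (2 * M * / INR m * INR m) with (2 * M) by (field; lra).
    assert (2 * M / (g * rho) * (g * rho) = 2 * M) by (field; split; lra).
    assert (0 < g * rho) by nra.
    assert (2 * M / (g * rho) * (g * rho) <= INR m * (g * rho)) by (apply Rmult_le_compat_r; lra).
    lra. }
  assert (H2 : 3 * M * (8 * g + / INR m) <= r).
  { assert (3 * M * / INR m <= r / 2).
    { apply (Rmult_le_reg_r (INR m)); auto. replace (3 * M * / INR m * INR m) with (3 * M) by (field; lra).
      assert (6 * M / r * r = 6 * M) by (field; lra).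
      assert (6 * M / r * r <= INR m * r) by (apply Rmult_le_compat_r; lra).
      lra. }
    lra. }
  assert (HHB : forall k, exists p : R * pt, 0 < fst p /\ fst p <= M /\
      (forall th, 0 <= th < fst p -> C0 (pscale th (udir m k))) /\
      (forall y, C0 y -> dot (snd p) y <= 1) /\ dot (snd p) (udir m k) = / fst p).
  { intros k. destruct (HB C0 rho M Hconv Hsym Hrho Hball Hbd (udir m k) (udir_norm m k)) as [s [f Hsf]].
    exists (s, f); simpl; auto. }
  set (P := fun k => proj1_sig (constructive_indefinite_description _ (HHB k))).
  set (S := fun k => fst (P k)).
  set (F := fun k => snd (P k)).
  assert (HF : forall k, 0 < S k /\ S k <= M /\ (forall th, 0 <= th < S k -> C0 (pscale th (udir m k))) /\
      (forall y, C0 y -> dot (F k) y <= 1) /\ dot (F k) (udir m k) = / S k).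
  { intros k. unfold S, F, P. destruct (constructive_indefinite_description _ (HHB k)) as [p Hp]. simpl. auto. }
  pose proof (CL C0 rho M g r m Hsym Hrho Hball HM Hg Hm0 H1 H2 F S HF) as HCL.
  assert (HFabs : forall k y, C0 y -> Rabs (dot (F k) y) <= 1).
  { intros k y Hy. destruct (HF k) as [_ [_ [_ [Hf _]]]].
    pose proof (Hf y Hy). pose proof (Hf _ (Hsym y Hy)). rewrite dot_neg in H0. apply Rabs_le; lra. }
  assert (HFnorm : forall k, normalized C0 (F k)).
  { intros k. destruct (HF k) as [Hs [_ [Hin [Hf Hfu]]]]. split; auto.
    intros e He. set (e' := Rmin (e / 2) (1 / 2)).
    assert (He' : 0 < e' <= 1 / 2) by (unfold e'; split; [apply Rmin_glb_lt; lra| apply Rmin_r]).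
    assert (He'' : e' < e) by (unfold e'; pose proof (Rmin_l (e / 2) (1 / 2)); lra).
    exists (pscale (S k * (1 - e')) (udir m k)). split.
    - apply Hin. split; nra.
    - unfold dot, pscale in *; simpl in *.
      replace (fst (F k) * (S k * (1 - e') * fst (udir m k)) + snd (F k) * (S k * (1 - e') * snd (udir m k)))
        with (S k * (1 - e') * (fst (F k) * fst (udir m k) + snd (F k) * snd (udir m k))) by ring.
      rewrite Hfu. field_simplify; lra. }
  set (Kn := (4 * m + 2)%nat).
  exists (Nat.max 3 Kn). split; [lia|]. intros j Hj.
  assert (Hj3 : (3 <= j)%nat) by lia.
  assert (HjK : (Kn <= j)%nat) by lia.
  assert (Hj0 : (0 < j)%nat) by lia.
  assert (HjR : 3 <= INR j) by (replace 3 with (INR 3) by (simpl; ring); apply le_INR; auto).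
  set (tau := g / 4).
  set (sigma := fun i : nat => 1 - tau * (INR i / (INR i + 1))).
  assert (Hsig : forall i, 1 - tau <= sigma i <= 1).
  { intros i. unfold sigma. pose proof (pos_INR i).
    assert (0 <= INR i / (INR i + 1) <= 1).
    { split. apply Rmult_le_pos; [lra| left; apply Rinv_0_lt_compat; lra].
      apply (Rmult_le_reg_r (INR i + 1)); [lra|]. field_simplify; lra. }
    unfold tau. nra. }
  set (a := fun i => pscale (sigma i) (F (i mod Kn)%nat)).
  set (L := ln (2 * INR j)).
  assert (HL : 0 < L).
  { unfold L. rewrite <- ln_1. apply ln_increasing; lra. }
  set (w := 4 * (L + 1) / g).
  assert (Hw : L < w).
  { unfold w. apply (Rmult_lt_reg_r g); [lra|]. replace (4 * (L + 1) / g * g) with (4 * (L + 1)) by (field; lra). nra. }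
  assert (Hw0 : 0 < w) by lra.
  assert (HLw : L / w <= g / 4).
  { unfold w. replace (L / (4 * (L + 1) / g)) with (g / 4 * (L / (L + 1))) by (field; lra).
    assert (L / (L + 1) <= 1) by (apply (Rmult_le_reg_r (L + 1)); [lra|]; field_simplify; lra).
    assert (0 < g / 4) by lra. nra. }
  assert (HP1 : forall c, C0 c -> forall i, Rabs (dot (a i) c) <= 1).
  { intros c Hc i. unfold a. rewrite dot_pscale, Rabs_mult, Rabs_right.
    pose proof (HFabs (i mod Kn)%nat c Hc). pose proof (Hsig i). pose proof (Rabs_pos (dot (F (i mod Kn)%nat) c)).
    unfold tau in *. nra.
    pose proof (Hsig i). unfold tau in *. lra. }
  assert (HinD : forall c, C0 c -> Ssum a j w c <= 2 * INR j).
  { intros c Hc. apply Ssum_small; auto. }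
  assert (HP2 : forall x, Ssum a j w x <= 2 * INR j -> exists c, C0 c /\ dist2 c x <= r).
  { intros x Hx. apply HCL. intros k Hk.
    pose proof (Ssum_bound a j w x Hw0 Hj0 Hx k ltac:(lia)) as Hb. fold L in Hb.
    unfold a in Hb. rewrite Nat.mod_small in Hb by lia.
    rewrite dot_pscale, Rabs_mult, (Rabs_right (sigma k)) in Hb by (pose proof (Hsig k); unfold tau in *; lra).
    pose proof (Hsig k). pose proof (Rabs_pos (dot (F k) x)).
    set (z := Rabs (dot (F k) x)) in *.
    assert (Hz : sigma k * z <= 1 + g / 4) by lra.
    assert ((1 - g / 4) * z <= 1 + g / 4).
    { assert ((1 - g / 4) * z <= sigma k * z) by (apply Rmult_le_compat_r; unfold tau in *; lra). lra. }
    nra. }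
  assert (phiD : forall x, phi a j w x <= 1 <-> Ssum a j w x <= 2 * INR j) by (intros; apply phi_le1_iff; auto).
  assert (Htau : 0 < tau) by (unfold tau; lra).
  assert (Hsigpos : forall i, 0 < sigma i) by (intros i; pose proof (Hsig i); unfold tau in *; lra).
  exists (fun x => phi a j w x <= 1). split.
  - exists a, w. split; [| split; [| split; [exact Hw| intros; tauto]]].
    +
      intros i l Hi Hl E. unfold a in E.
      pose proof (sigma_le C0 _ _ _ _ (Hsigpos i) (Hsigpos l) (HFnorm _) (HFnorm _) E).
      pose proof (sigma_le C0 _ _ _ _ (Hsigpos l) (Hsigpos i) (HFnorm _) (HFnorm _) (eq_sym E)).
      apply (sigma_inj i l tau Htau). unfold sigma in *. lra.
    +
      assert (Ha0 : a 0%nat = F 0%nat).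
      { unfold a, sigma. rewrite Nat.Div0.mod_0_l. simpl INR.
        replace (1 - tau * (0 / (0 + 1))) with 1 by (field; lra). apply pt_eq; simpl; ring. }
      assert (Hak : forall k, (k < Kn)%nat -> a k = pscale (sigma k) (F k)).
      { intros k Hk. unfold a. rewrite Nat.mod_small; auto. }
      set (a0 := a 0%nat).
      set (det := fun b : pt => fst a0 * snd b - snd a0 * fst b).
      assert (Hex : exists i1, (i1 < j)%nat /\ det (a i1) <> 0).
      { apply NNPP. intros Hno.
        assert (Hall : forall k, (k < j)%nat -> det (a k) = 0).
        { intros k Hk. apply NNPP. intros Hne. apply Hno. exists k; auto. }
        set (v := (- snd a0, fst a0)).
        assert (Hv : forall lam k, (k < Kn)%nat -> dot (F k) (pscale lam v) = 0).
        { intros lam k Hk. pose proof (Hall k ltac:(lia)) as Hd.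
          assert (e : dot (a k) v = det (a k)) by (unfold dot, det, v; simpl; ring).
          rewrite Hd in e. rewrite Hak in e by auto. rewrite dot_pscale in e.
          assert (dot (F k) v = 0).
          { pose proof (Hsigpos k). apply (Rmult_eq_reg_l (sigma k)); lra. }
          assert (e2 : forall f y c, dot f (pscale c y) = c * dot f y) by (intros; unfold dot, pscale; simpl; ring).
          rewrite e2, H. ring. }
        assert (Hbig : forall lam, Rabs (lam * fst a0) <= M + r /\ Rabs (lam * snd a0) <= M + r).
        { intros lam. clearbody a0. destruct (HCL (pscale lam v)) as [c [Hc Hcx]].
          { intros k Hk. rewrite Hv by auto. rewrite Rabs_R0. lra. }
          destruct (bound_abs c M (Hbd c Hc)) as [B1 B2].
          pose proof (dist2_ge1 c (pscale lam v)); pose proof (dist2_ge2 c (pscale lam v)).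
          unfold v, pscale in *; simpl in *.
          assert (Rabs (lam * - snd a0) <= Rabs (fst c) + Rabs (fst c - lam * - snd a0)).
          { replace (lam * - snd a0) with (fst c - (fst c - lam * - snd a0)) at 1 by ring. unfold Rminus at 1.
            eapply Rle_trans; [apply Rabs_triang|]. rewrite Rabs_Ropp; lra. }
          assert (Rabs (lam * fst a0) <= Rabs (snd c) + Rabs (snd c - lam * fst a0)).
          { replace (lam * fst a0) with (snd c - (snd c - lam * fst a0)) at 1 by ring. unfold Rminus at 1.
            eapply Rle_trans; [apply Rabs_triang|]. rewrite Rabs_Ropp; lra. }
          replace (lam * - snd a0) with (- (lam * snd a0)) in H3 by ring. rewrite Rabs_Ropp in H3.
          replace (fst c - - (lam * snd a0)) with (fst c - lam * - snd a0) in H3 by ring. split; lra. }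
        assert (Hnz : fst a0 <> 0 \/ snd a0 <> 0).
        { destruct (HF 0%nat) as [Hs [_ [_ [_ Hfu]]]].
          destruct (Req_dec (fst a0) 0) as [e1|e1]; auto. destruct (Req_dec (snd a0) 0) as [e2|e2]; auto.
          exfalso. unfold a0 in e1, e2. rewrite Ha0 in e1, e2. unfold dot in Hfu. rewrite e1, e2 in Hfu.
          assert (/ S 0%nat > 0) by (apply Rinv_0_lt_compat; lra). lra. }
        destruct Hnz as [Hnz|Hnz].
        - set (lam := (M + r + 1) / Rabs (fst a0)).
          pose proof (Rabs_pos_lt _ Hnz).
          destruct (Hbig lam) as [Hb _]. rewrite Rabs_mult in Hb.
          unfold lam in Hb. rewrite Rabs_right in Hb by (left; apply Rdiv_lt_0_compat; lra).
          replace ((M + r + 1) / Rabs (fst a0) * Rabs (fst a0)) with (M + r + 1) in Hb by (field; lra). lra.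
        - set (lam := (M + r + 1) / Rabs (snd a0)).
          pose proof (Rabs_pos_lt _ Hnz).
          destruct (Hbig lam) as [_ Hb]. rewrite Rabs_mult in Hb.
          unfold lam in Hb. rewrite Rabs_right in Hb by (left; apply Rdiv_lt_0_compat; lra).
          replace ((M + r + 1) / Rabs (snd a0) * Rabs (snd a0)) with (M + r + 1) in Hb by (field; lra). lra. }
      destruct Hex as [i1 [Hi1 Hdet]].
      set (b := a i1) in *.
      intros x.
      set (al := (fst x * snd b - snd x * fst b) / det b).
      set (be := (fst a0 * snd x - snd a0 * fst x) / det b).
      exists (fun i => (if Nat.eqb i 0 then al else 0) + (if Nat.eqb i i1 then be else 0)).
      assert (Hsplit : forall (v : nat -> R),
        fsum (fun i => ((if Nat.eqb i 0 then al else 0) + (if Nat.eqb i i1 then be else 0)) * v i) j = al * v 0%nat + be * v i1).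
      { intros v. rewrite (fsum_ext _ (fun i => (if Nat.eqb i 0 then al else 0) * v i + (if Nat.eqb i i1 then be else 0) * v i)) by (intros; ring).
        rewrite fsum_add, !fsum_delta; auto. }
      rewrite !Hsplit. fold a0. fold b.
      unfold al, be, det in *. split; field; auto.
  - apply Hopen.
    + split; [| split; [split| split]].
      * intros x y t Hx Hy Ht. apply phiD in Hx. apply phiD in Hy. apply phiD.
        pose proof (Ssum_convex a j w x y t Ht).
        assert (t * Ssum a j w x <= t * (2 * INR j)) by (apply Rmult_le_compat_l; lra).
        assert ((1 - t) * Ssum a j w y <= (1 - t) * (2 * INR j)) by (apply Rmult_le_compat_l; lra).
        lra.
      * intros x Hx. apply phiD. apply Ssum_closed; auto.
        intros e He. destruct (Hx e He) as [y [Hy Hxy]]. exists y. split; auto. apply phiD; auto.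
      * exists (2 * M + 2 * r). intros x Hx. apply phiD in Hx. destruct (HP2 x Hx) as [c [Hc Hcx]].
        destruct (bound_abs c M (Hbd c Hc)) as [B1 B2].
        pose proof (dist2_ge1 c x); pose proof (dist2_ge2 c x).
        eapply Rle_trans; [apply dist2_le|]. simpl. rewrite !Rminus_0_r.
        assert (Rabs (fst x) <= Rabs (fst c) + Rabs (fst c - fst x)).
        { replace (fst x) with (fst c - (fst c - fst x)) at 1 by ring. unfold Rminus at 1.
          eapply Rle_trans; [apply Rabs_triang|]. rewrite Rabs_Ropp; lra. }
        assert (Rabs (snd x) <= Rabs (snd c) + Rabs (snd c - snd x)).
        { replace (snd x) with (snd c - (snd c - snd x)) at 1 by ring. unfold Rminus at 1.
          eapply Rle_trans; [apply Rabs_triang|]. rewrite Rabs_Ropp; lra. }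
        lra.
      * exists (0, 0), (rho / 2). split; [lra|]. intros y Hy. apply phiD. apply HinD. apply Hball.
        pose proof (dist2_ge1 (0, 0) y); pose proof (dist2_ge2 (0, 0) y). simpl in *.
        rewrite !Rminus_0_l, !Rabs_Ropp in *. lra.
      * intros x Hx. apply phiD in Hx. apply phiD. simpl. rewrite Ssum_sym; auto.
    + exists r. split; [lra|]. split; [unfold r; lra|]. split.
      * intros c Hc. exists c. split; [apply phiD; auto|].
        unfold dist2. replace ((fst c - fst c) ^ 2 + (snd c - snd c) ^ 2) with 0 by ring. rewrite sqrt_0; lra.
      * intros b Hb. apply phiD in Hb. auto.
Qed.
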